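(* Let $U$ be a harmonic function on a domain $\Omega\subset\mathbb{R}^n$ with no critical points. Let $\alpha:(-\delta,\delta)\to\Omega$ be an integral curve of the vector field $\nabla U/\|\nabla U\|$. Then for every $s\in(-\delta,\delta)$, \[ \|\nabla U(\alpha(s))\|=\|\nabla U(\alpha(0))\|\exp\left((n-1)\int_0^s H(\alpha(\xi))\,d\xi\right), \] where for $p\in\Omega$, $H(p)$ is the mean curvature at $p$ of the level hypersurface $\{U=U(p)\}$ oriented by the unit normal field $\mathbf{N}=\nabla U/\|\nabla U\|$.
   Context: Mean curvature convention: for a hypersurface $M$ oriented by unit normal $\mathbf{N}$, $p\in M$ and a unit tangent vector $\mathbf{v}\in T_pM$, the normal section $M\cap\Pi_{\mathbf{v}}$ (where $\Pi_{\mathbf{v}}$ is the plane through $p$ spanned by $\mathbf{v}$ and $\mathbf{N}(p)$) has signed curvature $\kappa_p(\mathbf{v})=\langle c''(0),\mathbf{N}(p)\rangle$ for its unit-speed parametrization $c$ with $c(0)=p$, $c'(0)=\mathbf{v}$ (for a level set of $f$ with $\mathbf{N}=\nabla f/\|\nabla f\|$ this equals $-D^2_{\mathbf{v}}f(p)/\|\nabla f(p)\|$). $H(p)$ is the average of $\kappa_p(\mathbf{v})$ over the unit sphere of $T_pM$ (equivalently, $\frac{1}{n-1}$ times the sum of principal curvatures). The curve $\alpha$ has unit speed. *)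

(* Defs.v *)
From HB Require Import structures.
From mathcomp Require Import all_boot all_order all_algebra.
From mathcomp Require Import all_classical all_reals all_analysis.
Set Implicit Arguments.
Unset Strict Implicit.
Unset Printing Implicit Defensive.
Import Order.TTheory GRing.Theory Num.Theory.
Import numFieldNormedType.Exports.
Local Open Scope classical_set_scope.
Local Open Scope ring_scope.

Section Defs.
Variables (R : realType) (n : nat).
Notation V := 'rV[R]_n.

(* Euclidean inner product and Euclidean norm on R^n
   (the library norm on 'rV is the max norm, hence these explicit ones). *)
Definition dotv (u v : V) : R := \sum_(i < n) u ord0 i * v ord0 i.
Definition enorm (v : V) : R := Num.sqrt (dotv v v).

Definition evec (i : 'I_n) : V := delta_mx ord0 i.

Definition partial (U : V -> R) (i : 'I_n) : V -> R :=
  fun x => 'D_(evec i) U x.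

Definition grad (U : V -> R) (x : V) : V := \row_(i < n) partial U i x.

Definition C2_on (Om : set V) (U : V -> R) : Prop :=
  (forall x, Om x -> differentiable U x) /\
  (forall i x, Om x -> differentiable (partial U i) x) /\
  (forall i j x, Om x -> {for x, continuous (partial (partial U i) j)}).

Definition laplacian (U : V -> R) (x : V) : R :=
  \sum_(i < n) partial (partial U i) i x.

Definition harmonic_on (Om : set V) (U : V -> R) : Prop :=
  C2_on Om U /\ forall x, Om x -> laplacian U x = 0.

Definition unit_normal (U : V -> R) (x : V) : V :=
  (enorm (grad U x))^-1 *: grad U x.

(* normal curvature of the level set {U = U p} (oriented by N) in direction v:
   kappa_p(v) = - D^2_v U(p) / |grad U(p)|  (convention fixed in the paper) *)
Definition normal_curvature (U : V -> R) (p v : V) : R :=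
  - ('D_v ('D_v U) p) / enorm (grad U p).

Definition tangent_onb (U : V -> R) (p : V) (e : 'I_n.-1 -> V) : Prop :=
  (forall i, dotv (e i) (grad U p) = 0) /\
  (forall i j, dotv (e i) (e j) = (i == j)%:R).

(* h is the mean curvature at p of the level hypersurface {U = U p}:
   1/(n-1) times the trace of the second fundamental form over T_pM,
   computed in any orthonormal basis of T_pM. *)
Definition is_mean_curvature (U : V -> R) (p : V) (h : R) : Prop :=
  forall e : 'I_n.-1 -> V, tangent_onb U p e ->
    h = (n.-1%:R)^-1 * \sum_(i < n.-1) normal_curvature U p (e i).

End Defs.

Definition oint (R : realType) (f : R -> R) (a b : R) : R :=
  if a <= b then \int[lebesgue_measure]_(x in `[a, b]) f x
  else - \int[lebesgue_measure]_(x in `[b, a]) f x.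

(* Main.v *)
Require Import Defs.
From HB Require Import structures.
From mathcomp Require Import all_boot all_order all_algebra.
From mathcomp Require Import all_classical all_reals all_analysis.
From mathcomp Require Import ring lra.
Import Order.TTheory GRing.Theory Num.Theory.
Import numFieldNormedType.Exports.
Local Open Scope classical_set_scope.
Local Open Scope ring_scope.
Set Implicit Arguments. Unset Strict Implicit.

Section S.
Variables (R : realType) (n : nat).
Notation V := 'rV[R]_n.

Lemma dD_partial (f : V -> R) x v : differentiable f x ->
  'D_v f x = \sum_(i < n) v ord0 i * partial f i x.
Proof.
move=> df; rewrite deriveE // {1}(row_sum_delta v) linear_sum /=.
apply: eq_bigr => i _; rewrite linearZ /= /partial deriveE //.
Qed.

End S.


Section S.
Variables (R : realType) (n : nat).
Notation V := 'rV[R]_n.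

Lemma dDD (Om : set V) (U : V -> R) p v : open Om -> Om p ->
  (forall x, Om x -> differentiable U x) ->
  (forall i, differentiable (partial U i) p) ->
  'D_v ('D_v U) p = \sum_(i < n) \sum_(j < n) v ord0 i * v ord0 j * partial (partial U i) j p.
Proof.
move=> oOm Omp dU dP.
pose g := \sum_(i < n) (v ord0 i *: partial U i).
have Np : \forall x \near p, Om x by exact: oOm.
rewrite (@near_eq_derive _ _ _ _ g); last first.
  near=> x; rewrite /g fct_sumE dD_partial; last by apply: dU; near: x.
  by apply: eq_bigr => i _.
have := @is_derive_sum _ _ _ _ (fun i => v ord0 i *: partial U i) p v
   (fun i => v ord0 i *: 'D_v (partial U i) p) _.
move=> /(_ _) H; rewrite (@derive_val _ _ _ _ _ _ _ (H _)); last first.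
  move=> i; apply: is_deriveZ; apply: derivableP; exact: diff_derivable.
apply: eq_bigr => i _; rewrite dD_partial // /= -[_ *: _]/(_ * _) big_distrr /=.
by apply: eq_bigr => j _; rewrite mulrA.
Unshelve. all: by end_near.
Qed.
End S.
Section S2.
Variables (R : realType) (n : nat).
Notation V := 'rV[R]_n.
Lemma dP_curve (f : V -> R) (alpha : R -> V) (s : R) (N : V) :
  is_derive s 1 alpha N -> differentiable f (alpha s) ->
  is_derive s 1 (f \o alpha) (\sum_(j < n) N ord0 j * partial f j (alpha s)).
Proof.
move=> Ha df.
have da : differentiable alpha s by apply/derivable1_diffP; exact: ex_derive.
have dc : differentiable (f \o alpha) s by exact: differentiable_comp.
have := derivableP (@diff_derivable _ _ _ _ _ (1:R) dc).
rewrite deriveE // diff_comp // /= -deriveE; last by [].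
have -> : 'd alpha s 1 = N by rewrite -deriveE // (@derive_val _ _ _ _ _ _ _ Ha).
by rewrite dD_partial.
Qed.
End S2.


Section LA.
Variables (R : realType) (m : nat).
Notation V := 'rV[R]_m.+1.

Lemma dotvE (x y : V) : dotv x y = (x *m y^T) ord0 ord0.
Proof. by rewrite /dotv mxE; apply: eq_bigr => i _; rewrite mxE. Qed.

Lemma dot_eq0 (w : V) : dotv w w = 0 -> w = 0.
Proof.
rewrite /dotv => /psumr_eq0P H; apply/matrixP => i j.
have {}H := H (fun k _ => sqr_ge0 (w ord0 k)).
rewrite (ord1 i) mxE; have := H j isT => /eqP.
by rewrite -expr2 sqrf_eq0 => /eqP.
Qed.

Lemma householder (u : V) : dotv u u = 1 ->
  exists Q : 'M[R]_m.+1, Q *m Q^T = 1%:M /\ row ord_max Q = u.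
Proof.
move=> u1.
pose f : V := delta_mx ord0 ord_max.
pose w := u - f.
have [w0|wn0] := eqVneq w 0.
  exists 1%:M; split; first by rewrite trmx1 mulmx1.
  by rewrite rowE mulmx1; apply/esym/eqP; rewrite -subr_eq0 -/w w0.
pose k := dotv w w.
have kE : k = 2 - 2 * u ord0 ord_max.
  rewrite /k /dotv (bigD1 ord_max) //=.
  move: u1; rewrite /dotv (bigD1 ord_max) //= => u1.
  have -> : \sum_(i < m.+1 | i != ord_max) w ord0 i * w ord0 i =
            \sum_(i < m.+1 | i != ord_max) u ord0 i * u ord0 i.
    apply: eq_bigr => i /negbTE ni.
    by rewrite !mxE ni /= subr0.
  rewrite /w !mxE !eqxx /=.
  lra.
have k0 : k != 0 by apply: contra wn0 => /eqP /dot_eq0 ->.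
pose c := 2 / k.
pose W := w^T *m w.
pose Q := 1%:M - c *: W.
have WT : W^T = W by rewrite /W trmx_mul trmxK.
have WW : W *m W = k *: W.
  rewrite /W mulmxA -(mulmxA w^T) [w *m w^T]mx11_scalar -dotvE -/k.
  by rewrite mul_mx_scalar -scalemxAl.
exists Q; split.
  have QT : Q^T = Q.
    apply/matrixP => i j; rewrite mxE /Q !mxE eq_sym.
    by congr (_ - c * _); apply: eq_bigr => l _; rewrite !mxE mulrC.
  rewrite QT /Q mulmxDl mulmxDr mulmxN !mul1mx.
  rewrite mulNmx mulmxDr mulmxN mulmx1 -scalemxAl -scalemxAr WW !scalerA.
  have -> : c * c * k = c + c by rewrite /c; field.
  by rewrite scalerDl opprB addrK subrK.
rewrite rowE /Q mulmxDr mulmx1 mulmxN -scalemxAr /W mulmxA.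
rewrite [delta_mx _ _ *m _]mx11_scalar mul_scalar_mx scalerA.
have -> : ((('e_ord_max : 'rV[R]_m.+1) *m w^T) 0 0 = u ord0 ord_max - 1 :> R).
  rewrite mxE (bigD1 ord_max) //= big1 => [|j nj].
    by rewrite !mxE !eqxx /= mul1r addr0.
  by rewrite !mxE (negbTE nj) andbF mul0r.
have -> : c * (u ord0 ord_max - 1) = -1.
  rewrite /c kE; apply/eqP; rewrite -subr_eq0; apply/eqP.
  have h : 2 - 2 * u ord0 ord_max != 0 by rewrite -kE.
  field. exact: h.
by rewrite scaleN1r opprK /w addrC subrK.
Qed.
End LA.
Section LA2.
Variables (R : realType) (m : nat).
Notation V := 'rV[R]_m.+1.
Definition Qf (A : 'I_m.+1 -> 'I_m.+1 -> R) (v : V) :=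
  \sum_(i < m.+1) \sum_(j < m.+1) v ord0 i * v ord0 j * A i j.

Lemma trace_Qf (A : 'I_m.+1 -> 'I_m.+1 -> R) (Q : 'M[R]_m.+1) :
  Q *m Q^T = 1%:M -> \sum_(a < m.+1) Qf A (row a Q) = \sum_(i < m.+1) A i i.
Proof.
move=> /mulmx1C QQ.
rewrite /Qf exchange_big /=; apply: eq_bigr => i _.
rewrite exchange_big /= (bigD1 i) //=.
have -> : \sum_(j < m.+1 | j != i) \sum_(a < m.+1) row a Q ord0 i * row a Q ord0 j * A i j = 0.
  apply: big1 => j ji; rewrite -mulr_suml.
  have := congr1 (fun M : 'M[R]_m.+1 => M i j) QQ; rewrite !mxE eq_sym (negbTE ji) /=.
  move=> E; rewrite (_ : \sum_(a < m.+1) _ = 0) ?mul0r //.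
  by apply: etrans E; apply: eq_bigr => a _; rewrite !mxE.
rewrite addr0 -mulr_suml.
have := congr1 (fun M : 'M[R]_m.+1 => M i i) QQ; rewrite !mxE eqxx /= => E.
rewrite (_ : \sum_(a < m.+1) _ = 1) ?mul1r //.
by apply: etrans E; apply: eq_bigr => a _; rewrite !mxE.
Qed.

Lemma dotv_row (Q : 'M[R]_m.+1) a b :
  dotv (row a Q) (row b Q) = (Q *m Q^T) a b.
Proof. by rewrite /dotv mxE; apply: eq_bigr => l _; rewrite !mxE. Qed.

Lemma dotvZr (x y : V) c : dotv x (c *: y) = c * dotv x y.
Proof. by rewrite /dotv mulr_sumr; apply: eq_bigr => l _; rewrite !mxE mulrCA. Qed.
End LA2.


Section HF.
Variables (R : realType) (m : nat).
Notation V := 'rV[R]_m.+1.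

Lemma dotvC (x y : V) : dotv x y = dotv y x.
Proof. by rewrite /dotv; apply: eq_bigr => l _; rewrite mulrC. Qed.

Lemma dotv_ge0 (x : V) : 0 <= dotv x x.
Proof. by rewrite /dotv; apply: sumr_ge0 => l _; rewrite -expr2 sqr_ge0. Qed.

Lemma H_formula (U : V -> R) p h :
  grad U p != 0 -> is_mean_curvature U p h ->
  (forall v, 'D_v ('D_v U) p = Qf (fun i j => partial (partial U i) j p) v) ->
  laplacian U p = 0 ->
  h = Qf (fun i j => partial (partial U i) j p) (unit_normal U p)
      / (m%:R * enorm (grad U p)).
Proof.
move=> G0 hm DD lap.
set A := fun i j => _.
set G := grad U p.
set g := enorm G.
set N := unit_normal U p.
have Gp : 0 < dotv G G.
  rewrite lt_def dotv_ge0 andbT; by apply: contra G0 => /eqP /dot_eq0 E; rewrite -/G E.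
have gpos : 0 < g by rewrite /g /enorm sqrtr_gt0; exact: Gp.
have gg : g * g = dotv G G by rewrite -expr2 sqr_sqrtr // ltW.
have N1 : dotv N N = 1.
  rewrite /N /unit_normal -/G -/g dotvZr dotvC dotvZr -gg.
  by field; rewrite gt_eqF.
have GN : G = g *: N.
  by rewrite /N /unit_normal -/G -/g scalerA mulfV ?scale1r // gt_eqF.
have [Q [QQ QN]] := householder N1.
pose e k := row (widen_ord (leqnSn m) k) Q.
have onb : tangent_onb U p e.
  split.
    move=> i; rewrite -/G GN dotvZr -QN dotv_row QQ mxE.
    have -> : (widen_ord (leqnSn m) i == ord_max) = false.
      by apply/negbTE; rewrite -val_eqE /= ltn_eqF.
    by rewrite mulr0.
  move=> i j; rewrite dotv_row QQ mxE.
  by congr (_%:R); rewrite -val_eqE /= val_eqE.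
have := hm e onb; rewrite /= => ->.
have := trace_Qf A QQ; rewrite big_ord_recr /= QN.
rewrite (_ : \sum_(i < m.+1) A i i = 0); last exact: lap.
move=> E.
rewrite /normal_curvature -/G -/g.
under eq_bigr => k _ do rewrite DD.
rewrite -mulr_suml sumrN -/A.
have -> : \sum_(i < m) Qf A (e i) = - Qf A N by apply/eqP; rewrite -addr_eq0 E.
rewrite opprK invfM; ring.
Qed.
End HF.


Lemma cvg_sumR (R : realType) (T : Type) (F : set_system T) (FF : Filter F)
  (J : Type) (r : seq J) (f : J -> T -> R) (l : J -> R) :
  (forall j, f j x @[x --> F] --> l j) ->
  \sum_(j <- r) f j x @[x --> F] --> \sum_(j <- r) l j.
Proof.
move=> H; elim: r => [|a r IH].
  rewrite big_nil; under eq_fun do rewrite big_nil; exact: cvg_cst.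
rewrite big_cons; under eq_fun do rewrite big_cons; exact: cvgD.
Qed.

Lemma QfZ (R : realType) m (A : 'I_m.+1 -> 'I_m.+1 -> R) c v :
  Qf A (c *: v) = c ^+ 2 * Qf A v.
Proof.
rewrite /Qf mulr_sumr; apply: eq_bigr => i _; rewrite mulr_sumr.
by apply: eq_bigr => j _; rewrite !mxE; ring.
Qed.

Lemma dotv_gt0 (R : realType) m (x : 'rV[R]_m.+1) : x != 0 -> 0 < dotv x x.
Proof.
move=> x0; rewrite lt_def dotv_ge0 andbT; apply: contra x0 => /eqP /dot_eq0 ->.
by [].
Qed.


Lemma main_m (R : realType) (m : nat) (Om : set 'rV[R]_m.+1) (U : 'rV[R]_m.+1 -> R)
  (H : 'rV[R]_m.+1 -> R) (alpha : R -> 'rV[R]_m.+1) (delta : R) :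
  (0 < m)%N -> open Om -> harmonic_on Om U ->
  (forall x, Om x -> grad U x != 0) ->
  (forall p, Om p -> is_mean_curvature U p (H p)) ->
  0 < delta ->
  (forall s, - delta < s < delta ->
     Om (alpha s) /\ is_derive s 1 alpha (unit_normal U (alpha s))) ->
  forall s, - delta < s < delta ->
    enorm (grad U (alpha s)) =
    enorm (grad U (alpha 0)) * expR (m%:R * oint (fun xi => H (alpha xi)) 0 s).
Proof.
move=> m0 oOm [[dU [dP cP]] lap] G0 Hm d0 hal.
pose I s := - delta < s < delta.
pose P i := partial U i \o alpha.
pose S := \sum_(i < m.+1) (P i * P i).
pose A s i j := partial (partial U i) j (alpha s).
pose X s := \sum_(i < m.+1) \sum_(j < m.+1) P i s * P j s * A s i j.
have SE s : S s = dotv (grad U (alpha s)) (grad U (alpha s)).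
  rewrite /S fct_sumE /dotv; apply: eq_bigr => i _; rewrite !mxE.
  by [].
have Spos s : I s -> 0 < S s.
  by move=> /hal [Oa _]; rewrite SE; apply: dotv_gt0; exact: G0.
have gE s : enorm (grad U (alpha s)) = Num.sqrt (S s) by rewrite SE.
have HE s : I s -> H (alpha s) = X s / (m%:R * S s * Num.sqrt (S s)).
  move=> Is; have [Oa _] := hal s Is.
  rewrite (H_formula (G0 _ Oa) (Hm _ Oa)); last 2 first.
  - by move=> v; rewrite /Qf; exact: (dDD v oOm Oa dU (fun i => dP i _ Oa)).
  - exact: lap _ Oa.
  rewrite /unit_normal QfZ gE.
  have -> : Qf (fun i j => partial (partial U i) j (alpha s)) (grad U (alpha s)) = X s.
    by rewrite /Qf /X; apply: eq_bigr => i _; apply: eq_bigr => j _; rewrite !mxE.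
  have Sp := Spos s Is.
  have sq := sqr_sqrtr (ltW Sp).
  have sp : 0 < Num.sqrt (S s) by rewrite sqrtr_gt0.
  set q := Num.sqrt (S s) in sq sp *.
  rewrite -sq; field.
  by rewrite (gt_eqF sp) pnatr_eq0 -lt0n m0.
have dPi s i : I s -> is_derive s 1 (P i)
    (\sum_(j < m.+1) unit_normal U (alpha s) ord0 j * partial (partial U i) j (alpha s)).
  by move=> Is; have [Oa Ha] := hal s Is; exact: dP_curve Ha (dP i _ Oa).
have dS s : I s -> is_derive s 1 S (2 * X s / Num.sqrt (S s)).
  move=> Is.
  have D := @is_derive_sum _ _ _ _ (fun i => P i * P i) s 1 _
     (fun i => is_deriveM (dPi s i Is) (dPi s i Is)).
  apply: (is_derive_eq D).
  rewrite /X mulrAC mulr_sumr; apply: eq_bigr => i _.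
  rewrite -[P i s *: _]/(P i s * _) !mulr_sumr -big_split /=; apply: eq_bigr => j _.
  rewrite /unit_normal gE !mxE /P /A /=.
  ring.
pose F := (2 * m%:R)^-1 \*: (ln (R:=R) \o S).
have m0' : m%:R != 0 :> R by rewrite pnatr_eq0 -lt0n m0.
have dF s : I s -> is_derive s 1 F (H (alpha s)).
  move=> Is; have Sp := Spos s Is.
  have D1 := is_derive1_comp (is_derive1_ln Sp) (dS s Is).
  apply: is_derive_eq (is_deriveZ _ D1) _.
  rewrite HE //.
  have sp : 0 < Num.sqrt (S s) by rewrite sqrtr_gt0.
  rewrite /GRing.scale /=.
  field.
  by rewrite (gt_eqF sp) (gt_eqF Sp) m0'.
have cal s : I s -> {for s, continuous alpha}.
  move=> Is; have [_ Ha] := hal s Is; apply: differentiable_continuous.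
  by apply/derivable1_diffP; exact: ex_derive.
have cPi s i : I s -> {for s, continuous (P i)}.
  move=> Is; have [Oa _] := hal s Is; apply: continuous_comp; first exact: cal.
  exact: differentiable_continuous (dP i _ Oa).
have cA s i j : I s -> {for s, continuous (fun t => A t i j)}.
  move=> Is; have [Oa _] := hal s Is.
  exact: (continuous_comp (cal s Is) (cP i j _ Oa)).
have cX s : I s -> {for s, continuous X}.
  move=> Is; apply: cvg_sumR => i; apply: cvg_sumR => j.
  apply: cvgM; [apply: cvgM|]; [exact: cPi|exact: cPi|exact: cA].
have cS s : I s -> {for s, continuous S}.
  move=> Is.
  have SE' t : S t = \sum_(i < m.+1) P i t * P i t by rewrite /S fct_sumE.
  apply: cvg_trans (near_eq_cvg (f := fun t => \sum_(i < m.+1) P i t * P i t) _) _.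
    by near=> t; rewrite SE'.
  rewrite SE'; apply: cvg_sumR => i.
  by apply: cvgM; exact: cPi.
have cH s : I s -> {for s, continuous (H \o alpha)}.
  move=> Is.
  pose E t := X t / (m%:R * S t * Num.sqrt (S t)).
  have cE : {for s, continuous E}.
    apply: cvgM; first exact: cX.
    have Sp := Spos s Is.
    apply: cvgV.
      by rewrite mulf_neq0 ?mulf_neq0 ?m0' ?gt_eqF ?sqrtr_gt0 ?Sp.
    apply: cvgM; first by apply: cvgM; [exact: cvg_cst| exact: cS].
    exact: (continuous_comp (cS s Is) (@sqrt_continuous R _)).
  apply: cvg_trans (near_eq_cvg (f := E) _) _; last by rewrite /= HE.
  near=> t; rewrite /= HE //.
  by near: t; apply: near_in_itvoo; rewrite in_itv /=.
have cF s : I s -> {for s, continuous F}.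
  move=> Is; apply: differentiable_continuous.
  by apply/derivable1_diffP; exact: (@ex_derive _ _ _ _ _ _ _ (dF s Is)).
have FTC a b : I a -> I b -> a < b ->
    \int[lebesgue_measure]_(x in `[a, b]) H (alpha x) = F b - F a.
  move=> Ia Ib ab.
  have Isub x : a <= x -> x <= b -> I x.
    move: Ia Ib; rewrite /I => /andP[a1 a2] /andP[b1 b2] ax xb.
    by apply/andP; split; lra.
  rewrite /Rintegral (@continuous_FTC2 _ (H \o alpha) F a b ab).
  - by rewrite -EFinB.
  - apply: continuous_in_subspaceT => x; rewrite inE /= in_itv /= => /andP[ax xb].
    exact: cH (Isub _ ax xb).
  - split.
    + move=> x; rewrite in_itv /= => /andP[ax xb].
      exact: (@ex_derive _ _ _ _ _ _ _ (dF x (Isub _ (ltW ax) (ltW xb)))).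
    + by apply: cvg_at_right_filter; exact: cF.
    + by apply: cvg_at_left_filter; exact: cF.
  - move=> x; rewrite in_itv /= => /andP[ax xb].
    by rewrite derive1E (@derive_val _ _ _ _ _ _ _ (dF x (Isub _ (ltW ax) (ltW xb)))).
have I0 : I 0 by rewrite /I oppr_lt0 d0.
have key s : I s -> oint (fun xi => H (alpha xi)) 0 s = F s - F 0.
  move=> Is; rewrite /oint; case: ifPn => [s0|s0].
    have [->|sp] := eqVneq s 0.
      by rewrite set_itv1 Rintegral_set1 subrr.
    by apply: FTC => //; rewrite lt_def sp s0.
  rewrite -ltNge in s0.
  rewrite FTC //; first by rewrite opprB.
move=> s Is; rewrite !gE key //.
have FE t : F t = (2 * m%:R)^-1 * ln (S t) by [].
rewrite !FE.
have Sp := Spos s Is; have S0 := Spos 0 I0.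
set e := expR _.
have -> : S s = S 0 * e ^+ 2.
  rewrite expr2 -expRD /e.
  have -> : m%:R * ((2 * m%:R)^-1 * ln (S s) - (2 * m%:R)^-1 * ln (S 0)) +
            m%:R * ((2 * m%:R)^-1 * ln (S s) - (2 * m%:R)^-1 * ln (S 0)) =
            ln (S s) - ln (S 0) by field.
  rewrite expRB !lnK ?posrE //.
  by field; rewrite gt_eqF.
by rewrite sqrtrM ?ltW // sqrtr_sqr ger0_norm // expR_ge0.
Unshelve. all: by end_near.
Qed.


Unset Implicit Arguments. Set Strict Implicit.
Theorem theorem2 (R : realType) (n : nat) (Om : set 'rV[R]_n) (U : 'rV[R]_n -> R)
  (H : 'rV[R]_n -> R) (alpha : R -> 'rV[R]_n) (delta : R) :
  (1 < n)%N ->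
  open Om -> connected Om -> Om !=set0 ->
  harmonic_on Om U ->
  (forall x, Om x -> grad U x != 0) ->
  (forall p, Om p -> is_mean_curvature U p (H p)) ->
  0 < delta ->
  (forall s, - delta < s < delta ->
     Om (alpha s) /\ is_derive s 1 alpha (unit_normal U (alpha s))) ->
  forall s, - delta < s < delta ->
    enorm (grad U (alpha s)) =
    enorm (grad U (alpha 0)) * expR (n.-1%:R * oint (fun xi => H (alpha xi)) 0 s).
Proof.
move=> n1 oOm _ _ hU G0 Hm d0 hal.
case: n n1 Om U H alpha oOm hU G0 Hm hal => [|[|m]] // _ Om U H alpha oOm hU G0 Hm hal s Is.
exact: (@main_m R m.+1 Om U H alpha delta isT oOm hU G0 Hm d0 hal s Is).
Qed.
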